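(* Let $\{X,F\}$ and $\{Y,F\}$ be compatible pairs of skew invertible operators $X,Y,F\in\mathrm{End}(V\otimes V)$, with $F$ invertible. Then $$F_{12}C_{X,1}C_{Y,2}=C_{Y,1}C_{X,2}F_{12},\qquad F_{12}D_{X,1}D_{Y,2}=D_{Y,1}D_{X,2}F_{12},$$ $$F_{12}(C_XD_Y)_2=(C_XD_Y)_1F_{12},\qquad F_{12}(D_YC_X)_1=(D_YC_X)_2F_{12},$$ $$\mathrm{Tr}_{(1)}(C_{X,1}F_{12}^{-1})=(C_XD_F)_2=(D_FC_X)_2,\qquad \mathrm{Tr}_{(2)}(D_{X,2}F_{12}^{-1})=(C_FD_X)_1=(D_XC_F)_1 .$$
   Context: $V$ is a complex vector space of dimension $N$ with a fixed basis. For $X\in\mathrm{End}(V\otimes V)$ and $m<r$, $X_{mr}$ denotes the operator on $V^{\otimes n}$ acting as $X$ on tensor factors $m,r$ and as the identity elsewhere, $X_m:=X_{m,m+1}$; for $Y\in\mathrm{End}(V)$, $Y_m$ acts as $Y$ on factor $m$. $P$ is the flip $u\otimes v\mapsto v\otimes u$; $\mathrm{Tr}_{(i)}$ is partial trace over factor $i$. $X$ is skew invertible if there is $\Psi_X\in\mathrm{End}(V\otimes V)$ with $\mathrm{Tr}_{(2)}X_{12}\Psi_{X,23}=\mathrm{Tr}_{(2)}\Psi_{X,12}X_{23}=P_{13}$; then $C_X:=\mathrm{Tr}_{(1)}\Psi_{X,12}$, $D_X:=\mathrm{Tr}_{(2)}\Psi_{X,12}$. A pair $\{X,F\}$ is compatible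 if $X_1F_2F_1=F_2F_1X_2$ and $X_2F_1F_2=F_1F_2X_1$. *)

(* Defs.v *)
(* Operators on V^{(x)k}, V = C^N with fixed basis, are
   represented by their matrices, indexed by k-tuples of basis indices. *)
From HB Require Import structures.
From mathcomp Require Import all_boot all_order all_algebra all_field.
Set Implicit Arguments. Unset Strict Implicit. Unset Printing Implicit Defensive.
Import Order.TTheory GRing.Theory Num.Theory.
Local Open Scope ring_scope.

Definition idx2 (N : nat) : finType := ('I_N * 'I_N)%type.
Definition idx3 (N : nat) : finType := ('I_N * 'I_N * 'I_N)%type.

(* matrix of an operator: A i j = coefficient of basis vector e_i in A e_j *)
Definition Op (I : finType) := I -> I -> algC.

Definition opmul (I : finType) (A B : Op I) : Op I :=
  fun i j => \sum_(k : I) A i k * B k j.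
Definition opone (I : finType) : Op I := fun i j => (i == j)%:R.

Definition flip (N : nat) : Op (idx2 N) :=
  fun i j => ((i.1 == j.2) && (i.2 == j.1))%:R.

Definition on1 (N : nat) (Y : Op 'I_N) : Op (idx2 N) :=
  fun i j => Y i.1 j.1 * (i.2 == j.2)%:R.
Definition on2 (N : nat) (Y : Op 'I_N) : Op (idx2 N) :=
  fun i j => (i.1 == j.1)%:R * Y i.2 j.2.

Definition on12 (N : nat) (X : Op (idx2 N)) : Op (idx3 N) :=
  fun i j => X (i.1.1, i.1.2) (j.1.1, j.1.2) * (i.2 == j.2)%:R.
Definition on23 (N : nat) (X : Op (idx2 N)) : Op (idx3 N) :=
  fun i j => (i.1.1 == j.1.1)%:R * X (i.1.2, i.2) (j.1.2, j.2).

Definition ptr1 (N : nat) (A : Op (idx2 N)) : Op 'I_N :=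
  fun i j => \sum_(a < N) A (a, i) (a, j).
Definition ptr2 (N : nat) (A : Op (idx2 N)) : Op 'I_N :=
  fun i j => \sum_(a < N) A (i, a) (j, a).
Definition ptr2_3 (N : nat) (T : Op (idx3 N)) : Op (idx2 N) :=
  fun i j => \sum_(a < N) T (i.1, a, i.2) (j.1, a, j.2).

Definition skew_inverse (N : nat) (X Psi : Op (idx2 N)) : Prop :=
  ptr2_3 (opmul (on12 X) (on23 Psi)) = @flip N /\
  ptr2_3 (opmul (on12 Psi) (on23 X)) = @flip N.

Definition Cop (N : nat) (Psi : Op (idx2 N)) : Op 'I_N := ptr1 Psi.
Definition Dop (N : nat) (Psi : Op (idx2 N)) : Op 'I_N := ptr2 Psi.

Definition compatible (N : nat) (X F : Op (idx2 N)) : Prop :=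
  opmul (on12 X) (opmul (on23 F) (on12 F)) =
    opmul (on23 F) (opmul (on12 F) (on23 X)) /\
  opmul (on23 X) (opmul (on12 F) (on23 F)) =
    opmul (on12 F) (opmul (on23 F) (on12 X)).

(* Main.v *)
Require Import Defs.
From HB Require Import structures.
From mathcomp Require Import all_boot all_order all_algebra all_field.
From Stdlib Require Import FunctionalExtensionality.
From mathcomp Require Import ring.
Import Order.TTheory GRing.Theory Num.Theory.
Local Open Scope ring_scope.
Set Implicit Arguments. Unset Strict Implicit.

Section S.
Variable N : nat.
Local Notation I := ('I_N).
Local Notation R := algC.

Lemma sumdlT (T : finType) (i : T) (f : T -> R) : \sum_j ((i == j)%:R * f j) = f i.
Proof.
rewrite (bigD1 i) //= eqxx mul1r big1 ?addr0 // => j /negbTE.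
by rewrite eq_sym => ->; rewrite mul0r.
Qed.
Lemma sumdl (i : I) (f : I -> R) : \sum_j ((i == j)%:R * f j) = f i.
Proof.
rewrite (bigD1 i) //= eqxx mul1r big1 ?addr0 // => j /negbTE.
by rewrite eq_sym => ->; rewrite mul0r.
Qed.
Lemma sumdl' (i : I) (f : I -> R) : \sum_j ((j == i)%:R * f j) = f i.
Proof. by rewrite -(sumdl i f); apply: eq_bigr => j _; rewrite eq_sym. Qed.
Lemma sumdr (i : I) (f : I -> R) : \sum_j (f j * (i == j)%:R) = f i.
Proof. by rewrite -(sumdl i f); apply: eq_bigr => j _; rewrite mulrC. Qed.
Lemma sumdr' (i : I) (f : I -> R) : \sum_j (f j * (j == i)%:R) = f i.
Proof. by rewrite -(sumdl i f); apply: eq_bigr => j _; rewrite mulrC eq_sym. Qed.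

Lemma sumP (T U : finType) (f : T * U -> R) : \sum_u f u = \sum_a \sum_b f (a, b).
Proof. by rewrite pair_bigA; apply: eq_bigr => -[]. Qed.
Lemma sum2 (f : idx2 N -> R) : \sum_u f u = \sum_a \sum_b f (a, b).
Proof. exact: sumP. Qed.
Lemma sum3 (f : idx3 N -> R) : \sum_u f u = \sum_a \sum_b \sum_c f (a, b, c).
Proof. rewrite /idx3 sumP; exact: (sumP (fun a => \sum_c f (a, c))). Qed.

Lemma natb_and (a b : bool) : ((a && b)%:R : R) = a%:R * b%:R.
Proof. by case: a; case: b; rewrite ?mul1r ?mul0r. Qed.

Lemma on12_l (X : Op (idx2 N)) (h : idx3 N -> R) i1 i2 i3 :
  \sum_k on12 X (i1, i2, i3) k * h k = \sum_k1 \sum_k2 X (i1, i2) (k1, k2) * h (k1, k2, i3).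
Proof.
rewrite sum3; apply: eq_bigr => k1 _; apply: eq_bigr => k2 _.
rewrite /on12 /=; under eq_bigr do rewrite -mulrA; by rewrite -big_distrr /= sumdl.
Qed.
Lemma on23_l (X : Op (idx2 N)) (h : idx3 N -> R) i1 i2 i3 :
  \sum_k on23 X (i1, i2, i3) k * h k = \sum_k2 \sum_k3 X (i2, i3) (k2, k3) * h (i1, k2, k3).
Proof.
rewrite sum3 /on23 /= (bigD1 i1) //= [X in _ + X]big1 ?addr0; last first.
  by move=> k1 /negbTE ne; apply: big1 => k2 _; apply: big1 => k3 _; rewrite eq_sym ne !mul0r.
by apply: eq_bigr => k2 _; apply: eq_bigr => k3 _; rewrite eqxx mul1r.
Qed.
Lemma m12_23 (A B : Op (idx2 N)) i1 i2 i3 j1 j2 j3 :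
  opmul (on12 A) (on23 B) (i1, i2, i3) (j1, j2, j3) =
  \sum_b A (i1, i2) (j1, b) * B (b, i3) (j2, j3).
Proof.
rewrite /opmul on12_l /on23 /=; rewrite exchange_big /=. idtac.
apply: eq_bigr => b _.
under eq_bigr do rewrite mulrCA.
by rewrite (sumdl' j1 (fun i => A (i1, i2) (i, b) * B (b, i3) (j2, j3))).
Qed.
Lemma m23_12 (A B : Op (idx2 N)) i1 i2 i3 j1 j2 j3 :
  opmul (on23 A) (on12 B) (i1, i2, i3) (j1, j2, j3) =
  \sum_b A (i2, i3) (b, j3) * B (i1, b) (j1, j2).
Proof.
rewrite /opmul on23_l /on12 /=; apply: eq_bigr => b _.
under eq_bigr do rewrite mulrA.
by rewrite sumdr'.
Qed.


Lemma opm12 (X : Op (idx2 N)) (M : Op (idx3 N)) i1 i2 i3 j :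
  opmul (on12 X) M (i1, i2, i3) j = \sum_k1 \sum_k2 X (i1, i2) (k1, k2) * M (k1, k2, i3) j.
Proof. exact: on12_l. Qed.
Lemma opm23 (X : Op (idx2 N)) (M : Op (idx3 N)) i1 i2 i3 j :
  opmul (on23 X) M (i1, i2, i3) j = \sum_k2 \sum_k3 X (i2, i3) (k2, k3) * M (i1, k2, k3) j.
Proof. exact: on23_l. Qed.

Definition HS1 (X P : Op (idx2 N)) := forall i j k l : I,
  \sum_a \sum_b X (i, a) (j, b) * P (b, k) (a, l) = (i == l)%:R * (k == j)%:R.
Definition HS2 (X P : Op (idx2 N)) := forall i j k l : I,
  \sum_a \sum_b P (i, a) (j, b) * X (b, k) (a, l) = (i == l)%:R * (k == j)%:R.
Definition HInv (A B : Op (idx2 N)) := forall i j k l : I,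
  \sum_a \sum_c A (i, j) (a, c) * B (a, c) (k, l) = (i == k)%:R * (j == l)%:R.
Definition Hcomp1 (X F : Op (idx2 N)) := forall i1 i2 i3 j1 j2 j3 : I,
  \sum_k1 \sum_k2 X (i1, i2) (k1, k2) * \sum_b (F (k2, i3) (b, j3) * F (k1, b) (j1, j2)) =
  \sum_k2 \sum_k3 F (i2, i3) (k2, k3) * \sum_b (F (i1, k2) (j1, b) * X (b, k3) (j2, j3)).
Definition Hcomp2 (X F : Op (idx2 N)) := forall i1 i2 i3 j1 j2 j3 : I,
  \sum_k2 \sum_k3 X (i2, i3) (k2, k3) * \sum_b (F (i1, k2) (j1, b) * F (b, k3) (j2, j3)) =
  \sum_k1 \sum_k2 F (i1, i2) (k1, k2) * \sum_b (F (k2, i3) (b, j3) * X (k1, b) (j1, j2)).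

Lemma skewE X P : skew_inverse X P -> HS1 X P /\ HS2 X P.
Proof.
case=> h1 h2; split=> i j k l.
  have := congr1 (fun M => M (i, k) (j, l)) h1.
  rewrite /ptr2_3 /flip /= natb_and => <-.
  by apply: eq_bigr => a _; rewrite m12_23.
have := congr1 (fun M => M (i, k) (j, l)) h2.
rewrite /ptr2_3 /flip /= natb_and => <-.
by apply: eq_bigr => a _; rewrite m12_23.
Qed.

Lemma invE A B : opmul A B = @opone (idx2 N) -> HInv A B.
Proof.
move=> h i j k l; have := congr1 (fun M => M (i, j) (k, l)) h.
by rewrite /opmul /opone /= sum2 xpair_eqE natb_and.
Qed.

Lemma compE X F : compatible X F -> Hcomp1 X F /\ Hcomp2 X F.
Proof.
case=> h1 h2; split=> i1 i2 i3 j1 j2 j3.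
  have := congr1 (fun M => M (i1, i2, i3) (j1, j2, j3)) h1.
  rewrite opm12 opm23 => e.
  transitivity (\sum_k1 \sum_k2 X (i1, i2) (k1, k2) *
      opmul (on23 F) (on12 F) (k1, k2, i3) (j1, j2, j3)).
    by apply: eq_bigr => a _; apply: eq_bigr => b _; rewrite m23_12.
  rewrite e; by apply: eq_bigr => a _; apply: eq_bigr => b _; rewrite m12_23.
have := congr1 (fun M => M (i1, i2, i3) (j1, j2, j3)) h2.
rewrite opm12 opm23 => e.
transitivity (\sum_k2 \sum_k3 X (i2, i3) (k2, k3) *
    opmul (on12 F) (on23 F) (i1, k2, k3) (j1, j2, j3)).
  by apply: eq_bigr => a _; apply: eq_bigr => b _; rewrite m12_23.
rewrite e; by apply: eq_bigr => a _; apply: eq_bigr => b _; rewrite m23_12.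
Qed.

Ltac pull := repeat progress (
  try rewrite big_distrr /=; try rewrite big_distrl /=;
  try (under eq_bigr => ? _ do pull)).

Ltac pullL := match goal with |- _ = ?Rr => let r := fresh "r" in let e := fresh "e" in remember Rr as r eqn:e; pull; subst r end.
Ltac pullR := symmetry; pullL; symmetry.

Ltac xch n := match n with
  | O => rewrite exchange_big /=
  | S ?m => under eq_bigr => ? _ do xch m end.
Ltac lift k := match k with
  | O => idtac
  | S ?m => xch m; lift m end.
Ltac liftin d k := match d with
  | O => lift k
  | S ?e => under eq_bigr => ? _ do liftin e k end.
Ltac eqb n := match n with
  | O => idtac
  | S ?m => apply: eq_bigr => ? _; eqb m end.

Definition cC (P : Op (idx2 N)) (x y : I) : R := \sum_a P (a, x) (a, y).

Lemma coll2 (x j : I) (G : I -> I -> R) :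
  \sum_k1 \sum_b G k1 b * ((k1 == x)%:R * (b == j)%:R) = G x j.
Proof.
rewrite (bigD1 x) //= [X in _ + X]big1 ?addr0; last first.
  move=> k /negbTE ne; apply: big1 => b _; by rewrite ne mul0r mulr0.
rewrite (bigD1 j) //= [X in _ + X]big1 ?addr0 ?eqxx ?mul1r ?mulr1 //.
by move=> b /negbTE ne; rewrite ne mulr0 mulr0.
Qed.

Lemma TCE (X P : Op (idx2 N)) : HS2 X P -> forall p b : I,
  \sum_x \sum_y cC P x y * X (y, p) (x, b) = (p == b)%:R.
Proof.
move=> h p b.
transitivity (\sum_a \sum_x \sum_y P (a, x) (a, y) * X (y, p) (x, b)).
  pullL. pullR. lift 2%N. eqb 3%N. ring.
under eq_bigr => a _ do rewrite h.
by rewrite (sumdl' b (fun a => (p == a)%:R)).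
Qed.

Lemma FW1 (X A B P : Op (idx2 N)) : Hcomp1 X A -> HInv A B -> HS2 X P ->
 forall p q j2 j3,
 \sum_i2 \sum_i3 A (p,q) (i2,i3) * (\sum_x \sum_y \sum_a \sum_b \sum_c cC P x y * A (y,i2) (a,b) * X (b,i3) (c,j3) * B (a,c) (x,j2)) = A (p, q) (j2, j3).
Proof.
move=> hc hAB hs p q j2 j3.
transitivity (\sum_x \sum_y \sum_a \sum_c (cC P x y * B (a,c) (x,j2)) * (\sum_k2 \sum_k3 A (p,q) (k2,k3) * \sum_b (A (y,k2) (a,b) * X (b,k3) (c,j3)))).
  pullL. pullR.
  lift 2%N. liftin 1%N 2%N. liftin 2%N 2%N. liftin 3%N 3%N. liftin 6%N 1%N.
  eqb 8%N. ring.
under eq_bigr => x _ do under eq_bigr => y _ do under eq_bigr => a _ do under eq_bigr => c _ do rewrite -hc.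
transitivity (\sum_x \sum_y \sum_k2 \sum_k1 \sum_b (cC P x y * X (y,p) (k1,k2) * A (k2,q) (b,j3)) * (\sum_a \sum_c A (k1,b) (a,c) * B (a,c) (x,j2))).
  pullL. pullR. liftin 2%N 3%N. liftin 3%N 2%N. liftin 4%N 3%N. eqb 8%N. ring.
under eq_bigr => x _ do under eq_bigr => y _ do under eq_bigr => k2 _ do under eq_bigr => k1 _ do under eq_bigr => b _ do rewrite hAB.
under eq_bigr => x _ do under eq_bigr => y _ do under eq_bigr => k2 _ do rewrite coll2.
transitivity (\sum_k2 (\sum_x \sum_y cC P x y * X (y, p) (x, k2)) * A (k2, q) (j2, j3)).
  pullL. pullR. lift 2%N. eqb 4%N. ring.
under eq_bigr => k2 _ do rewrite (TCE hs).
by rewrite sumdl.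
Qed.

Lemma coll2r (x j : I) (G : I -> I -> R) :
  \sum_k1 \sum_b G k1 b * ((x == k1)%:R * (j == b)%:R) = G x j.
Proof.
rewrite -(coll2 x j G); apply: eq_bigr => k _; apply: eq_bigr => b _.
by rewrite (eq_sym x) (eq_sym j).
Qed.
Lemma coll2m (x j : I) (G : I -> I -> R) :
  \sum_k1 \sum_b G k1 b * ((k1 == x)%:R * (j == b)%:R) = G x j.
Proof.
rewrite -(coll2 x j G); apply: eq_bigr => k _; apply: eq_bigr => b _.
by rewrite (eq_sym j).
Qed.
Lemma coll2n (x j : I) (G : I -> I -> R) :
  \sum_k1 \sum_b G k1 b * ((x == k1)%:R * (b == j)%:R) = G x j.
Proof.
rewrite -(coll2 x j G); apply: eq_bigr => k _; apply: eq_bigr => b _.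
by rewrite (eq_sym x).
Qed.

Lemma FW2 (X A B P : Op (idx2 N)) : Hcomp2 X B -> HInv A B -> HS2 X P ->
 forall i2 i3 j2 j3,
 \sum_u \sum_v (\sum_x \sum_y \sum_a \sum_b \sum_c cC P x y * A (y,i2) (a,b) * X (b,i3) (c,v) * B (a,c) (x,u)) * B (u, v) (j2, j3) = B (i2, i3) (j2, j3).
Proof.
move=> hc hAB hs i2 i3 j2 j3.
transitivity (\sum_x \sum_y \sum_a \sum_b (cC P x y * A (y,i2) (a,b)) * (\sum_k2 \sum_k3 X (b,i3) (k2,k3) * \sum_b' (B (a,k2) (x,b') * B (b',k3) (j2,j3)))).
  pullL. pullR. lift 2%N. liftin 1%N 2%N. liftin 2%N 2%N. liftin 3%N 2%N. liftin 4%N 2%N. liftin 5%N 1%N. liftin 6%N 1%N.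
  eqb 8%N. ring.
under eq_bigr => x _ do under eq_bigr => y _ do under eq_bigr => a _ do under eq_bigr => b _ do rewrite hc.
transitivity (\sum_x \sum_y \sum_b'' \sum_k1 \sum_k2 (cC P x y * B (k2,i3) (b'',j3) * X (k1,b'') (x,j2)) * (\sum_a \sum_b A (y,i2) (a,b) * B (a,b) (k1,k2))).
  pullL. pullR. liftin 2%N 5%N. liftin 3%N 2%N. liftin 4%N 2%N. eqb 8%N. ring.
under eq_bigr => x _ do under eq_bigr => y _ do under eq_bigr => b _ do under eq_bigr => k1 _ do under eq_bigr => k2 _ do rewrite hAB.
under eq_bigr => x _ do under eq_bigr => y _ do under eq_bigr => b _ do rewrite coll2r.
transitivity (\sum_b (\sum_x \sum_y cC P x y * X (y, b) (x, j2)) * B (i2, i3) (b, j3)).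
  pullL. pullR. lift 2%N. eqb 4%N. ring.
under eq_bigr => b _ do rewrite (TCE hs).
by rewrite sumdl'.
Qed.

Lemma opmulA (T : finType) (A B C : Op T) : opmul (opmul A B) C = opmul A (opmul B C).
Proof.
apply: functional_extensionality => i; apply: functional_extensionality => j.
rewrite /opmul; under eq_bigr do rewrite big_distrl /=.
rewrite exchange_big /=; apply: eq_bigr => m _; rewrite big_distrr /=.
by apply: eq_bigr => k _; rewrite mulrA.
Qed.
Lemma opmul1l (T : finType) (A : Op T) : opmul (@opone T) A = A.
Proof.
apply: functional_extensionality => i; apply: functional_extensionality => j.
by rewrite /opmul /opone sumdlT.
Qed.
Lemma opmul1r (T : finType) (A : Op T) : opmul A (@opone T) = A.
Proof.
apply: functional_extensionality => i; apply: functional_extensionality => j.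
rewrite /opmul /opone -(sumdlT j (fun k => A i k)).
by apply: eq_bigr => k _; rewrite mulrC eq_sym.
Qed.
Lemma invI A B : HInv A B -> opmul A B = @opone (idx2 N).
Proof.
move=> h; apply: functional_extensionality => -[i j]; apply: functional_extensionality => -[k l].
by rewrite /opmul /opone sum2 h xpair_eqE natb_and.
Qed.

Definition Wop (X A B P : Op (idx2 N)) : Op (idx2 N) := fun u v =>
  \sum_x \sum_y \sum_a \sum_b \sum_c cC P x y * A (y,u.1) (a,b) * X (b,u.2) (c,v.2) * B (a,c) (x,v.1).

Lemma Wone1 X A B P : Hcomp1 X A -> HInv A B -> HInv B A -> HS2 X P -> Wop X A B P = @opone (idx2 N).
Proof.
move=> hc hAB hBA hs.
have h : opmul A (Wop X A B P) = A.
  apply: functional_extensionality => -[p q]; apply: functional_extensionality => -[j2 j3].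
  rewrite /opmul sum2 /=; exact: FW1.
by rewrite -(opmul1l (Wop X A B P)) -(invI hBA) opmulA h (invI hBA).
Qed.
Lemma Wone2 X A B P : Hcomp2 X B -> HInv A B -> HInv B A -> HS2 X P -> Wop X A B P = @opone (idx2 N).
Proof.
move=> hc hAB hBA hs.
have h : opmul (Wop X A B P) B = B.
  apply: functional_extensionality => -[i2 i3]; apply: functional_extensionality => -[j2 j3].
  rewrite /opmul sum2 /=; exact: FW2.
by rewrite -(opmul1r (Wop X A B P)) -(invI hBA) -opmulA h (invI hBA).
Qed.

Lemma E5 X A B P : Wop X A B P = @opone (idx2 N) -> HS1 X P -> forall i2 j2 i4 j4,
  \sum_x \sum_y \sum_a cC P x y * A (y, i2) (a, j4) * B (a, i4) (x, j2) = cC P i4 j4 * (i2 == j2)%:R.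
Proof.
move=> hW hs i2 j2 i4 j4.
transitivity (\sum_x \sum_y \sum_a \sum_b \sum_c (cC P x y * A (y,i2) (a,b) * B (a,c) (x,j2)) * ((b == j4)%:R * (i4 == c)%:R)).
  symmetry. under eq_bigr => x _ do under eq_bigr => y _ do under eq_bigr => a _ do rewrite coll2m.
  by [].
transitivity (\sum_x \sum_y \sum_a \sum_b \sum_c (cC P x y * A (y,i2) (a,b) * B (a,c) (x,j2)) * (\sum_i3 \sum_j3 X (b,i3) (c,j3) * P (j3,i4) (i3,j4))).
  symmetry; by under eq_bigr => x _ do under eq_bigr => y _ do under eq_bigr => a _ do under eq_bigr => b _ do under eq_bigr => c _ do rewrite hs.
transitivity (\sum_i3 \sum_j3 Wop X A B P (i2,i3) (j2,j3) * P (j3,i4) (i3,j4)).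
  rewrite /Wop /=. pullL. pullR. lift 5%N. liftin 1%N 5%N. eqb 8%N. ring.
rewrite hW /opone /=.
under eq_bigr => i3 _ do under eq_bigr => j3 _ do rewrite xpair_eqE natb_and -mulrA.
under eq_bigr => i3 _ do rewrite -big_distrr /= (sumdl i3 (fun j3 => P (j3, i4) (i3, j4))).
by rewrite -big_distrr /= mulrC.
Qed.

Lemma Kres (F G Phi : Op (idx2 N)) (C : I -> I -> R) :
  (forall i2 j2 i4 j4, \sum_x \sum_y \sum_a C x y * F (y, i2) (a, j4) * G (a, i4) (x, j2) = C i4 j4 * (i2 == j2)%:R) ->
  HS1 F Phi -> forall k i4 j2 l,
  \sum_x G (k, i4) (x, j2) * C x l = \sum_b C i4 b * Phi (b, k) (j2, l).
Proof.
move=> h5 hs k i4 j2 l.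
transitivity (\sum_x \sum_y \sum_a (C x y * G (a,i4) (x,j2)) * ((y == l)%:R * (k == a)%:R)).
  symmetry; under eq_bigr => x _ do rewrite coll2m.
  by apply: eq_bigr => x _; rewrite mulrC.
transitivity (\sum_x \sum_y \sum_a (C x y * G (a,i4) (x,j2)) * (\sum_i2 \sum_j4 F (y,i2) (a,j4) * Phi (j4,k) (i2,l))).
  symmetry; by under eq_bigr => x _ do under eq_bigr => y _ do under eq_bigr => a _ do rewrite hs.
transitivity (\sum_i2 \sum_j4 (\sum_x \sum_y \sum_a C x y * F (y,i2) (a,j4) * G (a,i4) (x,j2)) * Phi (j4,k) (i2,l)).
  pullL. pullR. lift 3%N. liftin 1%N 3%N. eqb 5%N. ring.
under eq_bigr => i2 _ do under eq_bigr => j4 _ do rewrite h5.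
rewrite exchange_big /=.
under eq_bigr => j4 _ do under eq_bigr => i2 _ do rewrite mulrAC.
by under eq_bigr => j4 _ do rewrite (sumdr' j2 (fun i2 => C i4 j4 * Phi (j4, k) (i2, l))).
Qed.

Lemma K'res (F G Phi : Op (idx2 N)) (C : I -> I -> R) :
  (forall i2 j2 i4 j4, \sum_x \sum_y \sum_a C x y * G (y, i2) (a, j4) * F (a, i4) (x, j2) = C i4 j4 * (i2 == j2)%:R) ->
  HS1 F Phi -> forall k i2 l j4,
  \sum_y C k y * G (y, i2) (l, j4) = \sum_b Phi (i2, k) (b, l) * C b j4.
Proof.
move=> h5 hs k i2 l j4.
transitivity (\sum_y \sum_a \sum_x (C x y * G (y,i2) (a,j4)) * ((a == l)%:R * (k == x)%:R)).
  symmetry; by under eq_bigr => y _ do rewrite coll2m.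
transitivity (\sum_y \sum_a \sum_x (C x y * G (y,i2) (a,j4)) * (\sum_i4 \sum_j2 F (a,i4) (x,j2) * Phi (j2,k) (i4,l))).
  symmetry; by under eq_bigr => y _ do under eq_bigr => a _ do under eq_bigr => x _ do rewrite hs.
transitivity (\sum_i4 \sum_j2 (\sum_x \sum_y \sum_a C x y * G (y,i2) (a,j4) * F (a,i4) (x,j2)) * Phi (j2,k) (i4,l)).
  pullL. pullR. lift 3%N. liftin 1%N 3%N. liftin 2%N 2%N. eqb 5%N. ring.
under eq_bigr => i4 _ do under eq_bigr => j2 _ do rewrite h5 mulrAC.
under eq_bigr => i4 _ do rewrite (sumdr i2 (fun j2 => C i4 j4 * Phi (j2, k) (i4, l))).
by apply: eq_bigr => b _; rewrite mulrC.
Qed.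



Definition star (A : Op (idx2 N)) : Op (idx2 N) := fun u v => A (v.2, v.1) (u.2, u.1).

Lemma starInv A B : HInv A B -> HInv (star B) (star A).
Proof.
move=> h i j k l; rewrite /star /=.
rewrite exchange_big /=.
under eq_bigr => c _ do under eq_bigr => a _ do rewrite mulrC.
by rewrite h mulrC !(eq_sym _ i) (eq_sym l).
Qed.

Lemma starS1 X P : HS2 X P -> HS1 (star X) (star P).
Proof.
move=> h i j k l; rewrite /star /=.
under eq_bigr => a _ do under eq_bigr => b _ do rewrite mulrC.
by rewrite h (eq_sym l) (eq_sym j).
Qed.

Lemma starS2 X P : HS1 X P -> HS2 (star X) (star P).
Proof.
move=> h i j k l; rewrite /star /=.
under eq_bigr => a _ do under eq_bigr => b _ do rewrite mulrC.
by rewrite h (eq_sym l) (eq_sym j).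
Qed.

Lemma starC1 X F : Hcomp1 X F -> Hcomp1 (star X) (star F).
Proof.
move=> h i1 i2 i3 j1 j2 j3; rewrite /star /=.
transitivity (\sum_k2 \sum_k3 F (j2, j1) (k2, k3) * \sum_b (F (j3, k2) (i3, b) * X (b, k3) (i2, i1))).
  pullL. pullR. lift 2%N. eqb 3%N. ring.
rewrite -h. pullL. pullR. lift 2%N. eqb 3%N. ring.
Qed.

Lemma starC2 X F : Hcomp2 X F -> Hcomp2 (star X) (star F).
Proof.
move=> h i1 i2 i3 j1 j2 j3; rewrite /star /=.
transitivity (\sum_k1 \sum_k2 F (j3, j2) (k1, k2) * \sum_b (F (k2, j1) (b, i1) * X (k1, b) (i3, i2))).
  pullL. pullR. lift 1%N. liftin 1%N 1%N. eqb 3%N. ring.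
rewrite -h. pullL. pullR. lift 1%N. liftin 1%N 1%N. eqb 3%N. ring.
Qed.

Lemma mul_on1_r (A : Op (idx2 N)) (C : Op I) i j k l :
  opmul A (on1 C) (i, j) (k, l) = \sum_a A (i, j) (a, l) * C a k.
Proof.
rewrite /opmul sum2 /on1 /=; apply: eq_bigr => a _.
under eq_bigr => b _ do rewrite mulrA.
by rewrite (sumdr' l (fun b => A (i, j) (a, b) * C a k)).
Qed.
Lemma mul_on2_l (C : Op I) (B : Op (idx2 N)) i j k l :
  opmul (on2 C) B (i, j) (k, l) = \sum_b C j b * B (i, b) (k, l).
Proof.
rewrite /opmul sum2 /on2 /= exchange_big /=; apply: eq_bigr => b _.
under eq_bigr => a _ do rewrite -mulrA.
by rewrite (sumdl i (fun a => C j b * B (a, b) (k, l))).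
Qed.
Lemma mul_on1_l (C : Op I) (B : Op (idx2 N)) i j k l :
  opmul (on1 C) B (i, j) (k, l) = \sum_a C i a * B (a, j) (k, l).
Proof.
rewrite /opmul sum2 /on1 /=; apply: eq_bigr => a _.
under eq_bigr => b _ do rewrite mulrAC.
by rewrite (sumdr j (fun b => C i a * B (a, b) (k, l))).
Qed.
Lemma mul_on2_r (A : Op (idx2 N)) (C : Op I) i j k l :
  opmul A (on2 C) (i, j) (k, l) = \sum_b A (i, j) (k, b) * C b l.
Proof.
rewrite /opmul sum2 /on2 /= exchange_big /=; apply: eq_bigr => b _.
under eq_bigr => a _ do rewrite mulrCA.
by rewrite (sumdl' k (fun a => A (i, j) (a, b) * C b l)).
Qed.

Definition swp (P : Op (idx2 N)) : Op (idx2 N) := fun u v => P (u.2, u.1) (v.2, v.1).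

Lemma opext (A B : Op (idx2 N)) : (forall i j k l, A (i, j) (k, l) = B (i, j) (k, l)) -> A = B.
Proof.
move=> h; apply: functional_extensionality => -[i j]; apply: functional_extensionality => -[k l].
exact: h.
Qed.

Section Keys.
Variables (X F G Psi Phi : Op (idx2 N)).
Hypotheses (hX : skew_inverse X Psi) (hF : skew_inverse F Phi)
  (hFG : opmul F G = @opone (idx2 N)) (hGF : opmul G F = @opone (idx2 N))
  (hc : compatible X F).

Lemma Kop : opmul G (on1 (Cop Psi)) = opmul (on2 (Cop Psi)) (swp Phi).
Proof.
case: (skewE hX) => s1 s2; case: (skewE hF) => f1 f2; case: (compE hc) => c1 c2.
have iFG := invE hFG; have iGF := invE hGF.
have W := Wone1 c1 iFG iGF s2.
have h5 := E5 W s1.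
have := Kres h5 f1 => kr.
apply: opext => i j k l; rewrite mul_on1_r mul_on2_l /swp /=.
exact: (kr i j l k).
Qed.

Lemma K'op : opmul (on1 (Cop Psi)) G = opmul (swp Phi) (on2 (Cop Psi)).
Proof.
case: (skewE hX) => s1 s2; case: (skewE hF) => f1 f2; case: (compE hc) => c1 c2.
have iFG := invE hFG; have iGF := invE hGF.
have W := Wone2 c2 iGF iFG s2.
have h5 := E5 W s1.
have := K'res h5 f1 => kr.
apply: opext => i j k l; rewrite mul_on1_l mul_on2_r /swp /=.
exact: (kr i j k l).
Qed.

Lemma Lop : opmul (on2 (Dop Psi)) G = opmul (swp Phi) (on1 (Dop Psi)).
Proof.
case: (skewE hX) => s1 s2; case: (skewE hF) => f1 f2; case: (compE hc) => c1 c2.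
have iFG := invE hFG; have iGF := invE hGF.
have W := Wone1 (starC1 c1) (starInv iGF) (starInv iFG) (starS2 s1).
have h5 := E5 W (starS1 s2).
have := Kres h5 (starS1 f2) => kr.
apply: opext => p q r s; rewrite mul_on1_r mul_on2_l /swp /=.
have := kr s r p q; rewrite /star /cC /= => e.
rewrite /Dop /ptr2.
under eq_bigr => b _ do rewrite mulrC.
rewrite e; by apply: eq_bigr => b _; rewrite mulrC.
Qed.

Lemma L'op : opmul G (on2 (Dop Psi)) = opmul (on1 (Dop Psi)) (swp Phi).
Proof.
case: (skewE hX) => s1 s2; case: (skewE hF) => f1 f2; case: (compE hc) => c1 c2.
have iFG := invE hFG; have iGF := invE hGF.
have W := Wone2 (starC2 c2) (starInv iFG) (starInv iGF) (starS2 s1).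
have h5 := E5 W (starS1 s2).
have := K'res h5 (starS1 f2) => kr.
apply: opext => p q r s; rewrite mul_on1_l mul_on2_r /swp /=.
have := kr s r q p; rewrite /star /cC /= => e.
rewrite /Dop /ptr2.
under eq_bigr => b _ do rewrite mulrC.
rewrite e; by apply: eq_bigr => b _; rewrite mulrC.
Qed.
End Keys.

Lemma on12comm (A B : Op I) : opmul (on1 A) (on2 B) = opmul (on2 B) (on1 A) :> Op (idx2 N).
Proof.
apply: opext => i j k l; rewrite mul_on2_r mul_on1_r /on1 /on2 /=.
under eq_bigr => b _ do rewrite mulrAC.
rewrite (sumdr j (fun b => A i k * B b l)).
under eq_bigr => a _ do rewrite mulrAC.
under eq_bigr => a _ do rewrite -mulrA. by rewrite (sumdl i (fun a => A a k * B j l)).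
Qed.
Lemma on1M (A B : Op I) : on1 (opmul A B) = opmul (on1 A) (on1 B) :> Op (idx2 N).
Proof.
apply: opext => i j k l; rewrite mul_on1_r /on1 /opmul /= big_distrl /=.
by apply: eq_bigr => a _; rewrite mulrAC.
Qed.
Lemma on2M (A B : Op I) : on2 (opmul A B) = opmul (on2 A) (on2 B) :> Op (idx2 N).
Proof.
apply: opext => i j k l; rewrite mul_on2_l /on2 /opmul /= big_distrr /=.
by apply: eq_bigr => a _; rewrite mulrCA.
Qed.

Lemma ptr1_cyc (A : Op I) (B : Op (idx2 N)) : ptr1 (opmul (on1 A) B) = ptr1 (opmul B (on1 A)).
Proof.
apply: functional_extensionality => i; apply: functional_extensionality => j.
rewrite /ptr1; under eq_bigr => a _ do rewrite mul_on1_l.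
under [RHS]eq_bigr => a _ do rewrite mul_on1_r.
rewrite exchange_big /=; apply: eq_bigr => a _; apply: eq_bigr => x _; by rewrite mulrC.
Qed.
Lemma ptr2_cyc (A : Op I) (B : Op (idx2 N)) : ptr2 (opmul (on2 A) B) = ptr2 (opmul B (on2 A)).
Proof.
apply: functional_extensionality => i; apply: functional_extensionality => j.
rewrite /ptr2; under eq_bigr => a _ do rewrite mul_on2_l.
under [RHS]eq_bigr => a _ do rewrite mul_on2_r.
rewrite exchange_big /=; apply: eq_bigr => a _; apply: eq_bigr => x _; by rewrite mulrC.
Qed.
Lemma ptr1_on2 (C : Op I) (P : Op (idx2 N)) : ptr1 (opmul (on2 C) (swp P)) = opmul C (Dop P).
Proof.
apply: functional_extensionality => i; apply: functional_extensionality => j.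
rewrite /ptr1; under eq_bigr => a _ do rewrite mul_on2_l /swp /=. rewrite /opmul /Dop /ptr2.
rewrite exchange_big /=; apply: eq_bigr => b _; by rewrite big_distrr.
Qed.
Lemma ptr1_on2r (C : Op I) (P : Op (idx2 N)) : ptr1 (opmul (swp P) (on2 C)) = opmul (Dop P) C.
Proof.
apply: functional_extensionality => i; apply: functional_extensionality => j.
rewrite /ptr1; under eq_bigr => a _ do rewrite mul_on2_r /swp /=. rewrite /opmul /Dop /ptr2.
rewrite exchange_big /=; apply: eq_bigr => b _; by rewrite big_distrl.
Qed.
Lemma ptr2_on1l (D : Op I) (P : Op (idx2 N)) : ptr2 (opmul (swp P) (on1 D)) = opmul (Cop P) D.
Proof.
apply: functional_extensionality => i; apply: functional_extensionality => j.
rewrite /ptr2; under eq_bigr => a _ do rewrite mul_on1_r /swp /=. rewrite /opmul /Cop /ptr1.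
rewrite exchange_big /=; apply: eq_bigr => b _; by rewrite big_distrl.
Qed.
Lemma ptr2_on1r (D : Op I) (P : Op (idx2 N)) : ptr2 (opmul (on1 D) (swp P)) = opmul D (Cop P).
Proof.
apply: functional_extensionality => i; apply: functional_extensionality => j.
rewrite /ptr2; under eq_bigr => a _ do rewrite mul_on1_l /swp /=. rewrite /opmul /Cop /ptr1.
rewrite exchange_big /=; apply: eq_bigr => b _; by rewrite big_distrr.
Qed.

End S.

Unset Implicit Arguments.

Theorem corollary3p4 (N : nat) (X Y F PsiX PsiY PsiF Finv : Op (idx2 N)) :
  skew_inverse X PsiX -> skew_inverse Y PsiY -> skew_inverse F PsiF ->
  opmul F Finv = @opone (idx2 N) -> opmul Finv F = @opone (idx2 N) ->
  compatible X F -> compatible Y F ->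
  let CX := Cop PsiX in let DX := Dop PsiX in
  let CY := Cop PsiY in let DY := Dop PsiY in
  let CF := Cop PsiF in let DF := Dop PsiF in
  (opmul F (opmul (on1 CX) (on2 CY)) = opmul (on1 CY) (opmul (on2 CX) F)
   /\ opmul F (opmul (on1 DX) (on2 DY)) = opmul (on1 DY) (opmul (on2 DX) F)
   /\ opmul F (on2 (opmul CX DY)) = opmul (on1 (opmul CX DY)) F
   /\ opmul F (on1 (opmul DY CX)) = opmul (on2 (opmul DY CX)) F
   /\ (ptr1 (opmul (on1 CX) Finv) = opmul CX DF /\ opmul CX DF = opmul DF CX)
   /\ (ptr2 (opmul (on2 DX) Finv) = opmul CF DX /\ opmul CF DX = opmul DX CF)).
Proof.
move=> sX sY sF hFG hGF cX cY; cbv zeta.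
have KX := Kop sX sF hFG hGF cX; have KY := Kop sY sF hFG hGF cY.
have K'X := K'op sX sF hFG hGF cX; have K'Y := K'op sY sF hFG hGF cY.
have LX := Lop sX sF hFG hGF cX; have LY := Lop sY sF hFG hGF cY.
have L'X := L'op sX sF hFG hGF cX; have L'Y := L'op sY sF hFG hGF cY.
set Fs := swp PsiF in KX KY K'X K'Y LX LY L'X L'Y.
have Kf (C : Op 'I_N) : opmul Finv (on1 C) = opmul (on2 C) Fs -> on1 C = opmul F (opmul (on2 C) Fs).
  by move=> e; rewrite -e -opmulA hFG opmul1l.
have K'f (C : Op 'I_N) : opmul (on1 C) Finv = opmul Fs (on2 C) -> on1 C = opmul (opmul Fs (on2 C)) F.
  by move=> e; rewrite -e opmulA hGF opmul1r.
have Lf (C : Op 'I_N) : opmul (on2 C) Finv = opmul Fs (on1 C) -> on2 C = opmul (opmul Fs (on1 C)) F.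
  by move=> e; rewrite -e opmulA hGF opmul1r.
have L'f (C : Op 'I_N) : opmul Finv (on2 C) = opmul (on1 C) Fs -> on2 C = opmul F (opmul (on1 C) Fs).
  by move=> e; rewrite -e -opmulA hFG opmul1l.
split.
  rewrite on12comm (K'f _ K'X) (Kf _ KY).
  by rewrite -!opmulA.
split.
  rewrite -!opmulA on12comm (Lf _ LY) (L'f _ L'X).
  by rewrite -!opmulA.
split.
  rewrite on2M on1M (Lf _ LY) (Kf _ KX).
  by rewrite -!opmulA.
split.
  rewrite on1M on2M (K'f _ K'X) (L'f _ L'Y).
  by rewrite -!opmulA.
split.
  split; first by rewrite ptr1_cyc KX ptr1_on2.
  by rewrite -ptr1_on2 -KX -ptr1_cyc K'X ptr1_on2r.
split; first by rewrite LX ptr2_on1l.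
by rewrite -ptr2_on1l -LX ptr2_cyc L'X ptr2_on1r.
Qed.
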